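(* Let $T$ be a $\delta$-Jordan Lie supertriple system over a field $\mathbb{K}$. Then $[C(T),QC(T)]\subseteq End(T,Z(T))$, i.e. for all homogeneous $D_1\in C(T)$ and $D_2\in QC(T)$ the map $[D_1,D_2]=D_1D_2-(-1)^{|D_1||D_2|}D_2D_1$ sends $T$ into $Z(T)$. Moreover, if $Z(T)=\{0\}$, then $[C(T),QC(T)]=\{0\}$.
   Context: A $\delta$-Jordan Lie supertriple system ($\delta\in\{1,-1\}$) is a $\mathbb{Z}_2$-graded vector space $T=T_{\bar 0}\oplus T_{\bar 1}$ with a trilinear product $[\cdot,\cdot,\cdot]$ such that, for all homogeneous $a,b,c,d,e$ (with $|a|$ the degree of $a$): $|[a,b,c]|=|a|+|b|+|c|$; $[b,a,c]=-\delta(-1)^{|a||b|}[a,b,c]$; $(-1)^{|a||c|}[a,b,c]+(-1)^{|b||a|}[b,c,a]+(-1)^{|c||b|}[c,a,b]=0$; and $[a,b,[c,d,e]]=[[a,b,c],d,e]+(-1)^{|c|(|a|+|b|)}[c,[a,b,d],e]+\delta(-1)^{(|a|+|b|)(|c|+|d|)}[c,d,[a,b,e]]$. $End(T)$ is the $\mathbb{Z}_2$-graded space of linear maps $T\to T$ with Lie superbracket $[D,D']=DD'-(-1)^{|D||D'|}D'D$; $End(T,Z(T))$ denotes the linear maps $T\to T$ with image in $Z(T)$. For a nonnegative integer $k$, $C^k(T)$ is the set of homogeneous $D\in End(T)$ with $\delta^{k}[D(a),b,c]=\delta^{k}(-1)^{|D||a|}[a,D(b),c]=\delta^{k}(-1)^{|D|(|a|+|b|)}[a,b,D(c)]=D([a,b,c])$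 for all homogeneous $a,b,c$; the centroid is $C(T)=\bigoplus_{k\ge0}C^k(T)$. The quasicentroid is $QC(T)=\{D\in End(T)\mid D([a,b,c])=[D(a),b,c]\ \forall a,b,c\in T\}$. The center is $Z(T)=\{a\in T\mid [a,b,c]=0\ \forall b,c\in T\}$. *)

(* Defs.v *)
From mathcomp Require Import all_boot all_algebra.
Set Implicit Arguments. Unset Strict Implicit. Unset Printing Implicit Defensive.
Import GRing.Theory.
Local Open Scope ring_scope.

Section JLSTS.
Variables (K : fieldType) (V0 V1 : lmodType K).

(* The Z_2-graded space T = T_0 (+) T_1, realized as the product V0 * V1. *)
Definition gsp := (V0 * V1)%type.

(* x is homogeneous of degree b (false = even 0, true = odd 1). *)
Definition homog (b : bool) (x : gsp) : Prop :=
  if b then x.1 = 0 else x.2 = 0.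

Definition sgn (b : bool) : K := if b then -1 else 1.

Definition lin (f : gsp -> gsp) : Prop :=
  forall (k : K) (x y : gsp), f (k *: x + y) = k *: f x + f y.

Definition trilinear (tp : gsp -> gsp -> gsp -> gsp) : Prop :=
  (forall b c, lin (fun a => tp a b c)) /\
  (forall a c, lin (fun b => tp a b c)) /\
  (forall a b, lin (fun c => tp a b c)).

Definition is_JLSTS (delta : K) (tp : gsp -> gsp -> gsp -> gsp) : Prop :=
  (delta = 1 \/ delta = -1) /\
  trilinear tp /\
  (forall a b c da db dc, homog da a -> homog db b -> homog dc c ->
     homog (addb (addb da db) dc) (tp a b c)) /\
  (forall a b c da db dc, homog da a -> homog db b -> homog dc c ->
     tp b a c = (- delta * sgn (da && db)) *: tp a b c) /\
  (forall a b c da db dc, homog da a -> homog db b -> homog dc c ->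
     sgn (da && dc) *: tp a b c + sgn (db && da) *: tp b c a
       + sgn (dc && db) *: tp c a b = 0) /\
  (forall a b c d e da db dc dd de, homog da a -> homog db b -> homog dc c ->
     homog dd d -> homog de e ->
     tp a b (tp c d e) =
       tp (tp a b c) d e
       + sgn (dc && addb da db) *: tp c (tp a b d) e
       + (delta * sgn (addb da db && addb dc dd)) *: tp c d (tp a b e)).

Definition homog_map (d : bool) (D : gsp -> gsp) : Prop :=
  forall b x, homog b x -> homog (addb b d) (D x).

Definition inCk (delta : K) (tp : gsp -> gsp -> gsp -> gsp)
    (k : nat) (d : bool) (D : gsp -> gsp) : Prop :=
  homog_map d D /\
  forall a b c da db dc, homog da a -> homog db b -> homog dc c ->
    [/\ delta ^+ k *: tp (D a) b c = D (tp a b c),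
        (delta ^+ k * sgn (d && da)) *: tp a (D b) c = D (tp a b c) &
        (delta ^+ k * sgn (d && addb da db)) *: tp a b (D c) = D (tp a b c)].

(* D in the centroid C(T) = sum over k of C^k(T) (as a subspace of End(T)) *)
Definition inC (delta : K) (tp : gsp -> gsp -> gsp -> gsp) (D : gsp -> gsp)
    : Prop :=
  exists (n : nat) (k : 'I_n -> nat) (d : 'I_n -> bool) (E : 'I_n -> gsp -> gsp),
    (forall i, lin (E i) /\ inCk delta tp (k i) (d i) (E i)) /\
    (forall x, D x = \sum_(i < n) E i x).

(* D in the quasicentroid QC(T) (D is assumed in End(T), i.e. linear) *)
Definition inQC (tp : gsp -> gsp -> gsp -> gsp) (D : gsp -> gsp) : Prop :=
  forall a b c, D (tp a b c) = tp (D a) b c.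

Definition inZ (tp : gsp -> gsp -> gsp -> gsp) (a : gsp) : Prop :=
  forall b c, tp a b c = 0.

Definition sbr (d1 d2 : bool) (D1 D2 : gsp -> gsp) (x : gsp) : gsp :=
  D1 (D2 x) - sgn (d1 && d2) *: D2 (D1 x).

End JLSTS.

(* Main.v *)
Require Import Defs.
From mathcomp Require Import all_boot all_algebra.
From mathcomp Require Import ring.
Import GRing.Theory.
Local Open Scope ring_scope.

Section Aux.
Variables (K : fieldType) (V0 V1 : lmodType K).
Local Notation G := (gsp V0 V1).

Lemma lin0 (f : G -> G) : lin f -> f 0 = 0.
Proof.
move=> Hf; have H : f 0 = f 0 + f 0.
  by have := Hf 1 0 0; rewrite !scale1r addr0.
by apply: (addrI (f 0)); rewrite addr0 -H.
Qed.
Lemma linD (f : G -> G) x y : lin f -> f (x + y) = f x + f y.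
Proof. by move=> Hf; have := Hf 1 x y; rewrite !scale1r. Qed.
Lemma linZ (f : G -> G) k x : lin f -> f (k *: x) = k *: f x.
Proof. by move=> Hf; have := Hf k x 0; rewrite addr0 lin0 // addr0. Qed.
Lemma linN (f : G -> G) x : lin f -> f (- x) = - f x.
Proof. by move=> Hf; rewrite -scaleN1r linZ // scaleN1r. Qed.
Lemma linB (f : G -> G) x y : lin f -> f (x - y) = f x - f y.
Proof. by move=> Hf; rewrite linD // linN. Qed.
Lemma lin_sum (f : G -> G) I (r : seq I) (P : pred I) (F : I -> G) : lin f ->
  f (\sum_(i <- r | P i) F i) = \sum_(i <- r | P i) f (F i).
Proof.
move=> Hf; symmetry; apply: (big_rec2 (fun y1 y2 => y1 = f y2)).
  by rewrite lin0.
by move=> i a b _ ->; rewrite linD.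
Qed.

Lemma homog0 b : homog b (0 : G).
Proof. by case: b. Qed.
Lemma homogD b (x y : G) : homog b x -> homog b y -> homog b (x + y).
Proof. by case: b; rewrite /homog /= => -> ->; rewrite addr0. Qed.
Lemma homog_sum b I (r : seq I) (P : pred I) (F : I -> G) :
  (forall i, P i -> homog b (F i)) -> homog b (\sum_(i <- r | P i) F i).
Proof. move=> H; apply: big_ind => //; [exact: homog0 | exact: homogD]. Qed.
Lemma homogN b (x : G) : homog b x -> homog b (- x).
Proof. by case: b; rewrite /homog /= => ->; rewrite oppr0. Qed.
Lemma homog_both b (x : G) : homog b x -> homog (~~ b) x -> x = 0.
Proof. by case: b; case: x => a c; rewrite /homog /= => -> ->. Qed.
Lemma decomp (x : G) : x = (x.1, 0) + (0, x.2).
Proof. by case: x => a c; rewrite /= ; congr pair; rewrite /= ?addr0 ?add0r. Qed.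
Lemma homog_red (g : G -> G) : (forall x y, g (x + y) = g x + g y) ->
  (forall b x, homog b x -> g x = 0) -> forall x, g x = 0.
Proof.
move=> gD H x; rewrite (decomp x) gD (H false) ?(H true) ?addr0 //.
Qed.
Lemma sgnM d1 da d2 : @sgn K (d1 && addb da d2) = @sgn K (d1 && d2) * @sgn K (d1 && da).
Proof. by case: d1 da d2 => [] [] [] /=; rewrite /sgn ?mulr1 ?mul1r ?mulrNN ?mulr1. Qed.

Lemma keyE (delta : K) (tp : G -> G -> G -> G) k d1 d2 (E D2 : G -> G) :
  (delta = 1 \/ delta = -1) -> trilinear tp -> lin E -> inCk delta tp k d1 E ->
  lin D2 -> homog_map d2 D2 -> inQC tp D2 ->
  forall y b c dy db dc, homog dy y -> homog db b -> homog dc c ->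
  tp (E (D2 y) - @sgn K (d1 && d2) *: D2 (E y)) b c = 0.
Proof.
move=> Hd [Ht1 _] HEl [_ HE] HDl HDh HQ y b c dy db dc hy hb hc.
have dk : delta ^+ k * delta ^+ k = 1.
  by rewrite -exprMn; case: Hd => ->; rewrite ?mulr1 ?mulrNN ?mulr1 expr1n.
set v := tp _ b c.
suff H : delta ^+ k *: v = 0 by rewrite -[v]scale1r -dk -scalerA H scaler0.
have hDy := HDh _ _ hy.
have [e1 e2 _] := HE _ _ _ _ _ _ hy hb hc.
have [f1 f2 _] := HE _ _ _ _ _ _ hDy hb hc.
rewrite /v (linB _ _ _ (Ht1 b c)) /= (linZ _ _ _ (Ht1 b c)) /= scalerBr scalerA mulrC -scalerA.
rewrite f1 -HQ -HQ -(linZ _ _ _ HDl) e1 HQ -f2 -e2 (linZ _ _ _ HDl) HQ.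
rewrite scalerA sgnM.
have -> : @sgn K (d1 && d2) * (delta ^+ k * sgn K (d1 && dy)) = delta ^+ k * (sgn K (d1 && d2) * sgn K (d1 && dy)) by ring.
by rewrite subrr.
Qed.
End Aux.
Arguments lin0 {K V0 V1}.
Arguments linD {K V0 V1}.
Arguments linZ {K V0 V1}.
Arguments linN {K V0 V1}.
Arguments linB {K V0 V1}.
Arguments lin_sum {K V0 V1}.
Arguments homog0 {K V0 V1}.
Arguments homogD {K V0 V1}.
Arguments homog_sum {K V0 V1}.
Arguments homogN {K V0 V1}.
Arguments homog_both {K V0 V1}.
Arguments decomp {K V0 V1}.
Arguments homog_red {K V0 V1}.
Arguments keyE {K V0 V1}.
Arguments sgnM {K}.

Theorem theorem2p16 (K : fieldType) (V0 V1 : lmodType K) (delta : K)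
    (tp : gsp V0 V1 -> gsp V0 V1 -> gsp V0 V1 -> gsp V0 V1) :
  is_JLSTS delta tp ->
  forall (D1 D2 : gsp V0 V1 -> gsp V0 V1) (d1 d2 : bool),
    lin D1 -> lin D2 -> homog_map d1 D1 -> homog_map d2 D2 ->
    inC delta tp D1 -> inQC tp D2 ->
    (forall x, inZ tp (sbr d1 d2 D1 D2 x)) /\
    ((forall a, inZ tp a -> a = 0) -> forall x, sbr d1 d2 D1 D2 x = 0).
Proof.
move=> [Hd [Htri _]] D1 D2 d1 d2 HD1l HD2l HD1h HD2h [n [k [d [E [HE HD1E]]]]] HQ.
have Htri' := Htri; case: Htri' => [Ht1 [Ht2 Ht3]].
pose F x := \sum_(i < n | d i == d1) E i x.
have HF : forall x, D1 x = F x.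
  move=> x; apply/eqP; rewrite -subr_eq0; apply/eqP; move: x.
  apply: (homog_red (fun x => D1 x - F x)).
    move=> x y /=; rewrite (linD _ _ _ HD1l) /F.
    under eq_bigr => i _ do rewrite (linD _ _ _ (HE i).1).
    by rewrite big_split /= opprD addrACA.
  move=> b x hx /=.
  have e : \sum_(i < n | d i != d1) E i x = D1 x - F x.
    rewrite HD1E [in RHS](bigID (fun i => d i == d1)) /= /F.
    by rewrite addrAC subrr add0r.
  rewrite -e; apply: (homog_both (addb b d1)).
    by rewrite e; apply: homogD; [exact: HD1h | apply: homogN; apply: homog_sum => i /eqP <-; exact: (HE i).2.1 _ _ hx].
  apply: homog_sum => i /negPf hi.
  have -> : ~~ addb b d1 = addb b (d i) by move: hi; case: (d i); case: (d1); case: (b).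
  exact: (HE i).2.1 _ _ hx.
have Hsbr : forall x, sbr d1 d2 D1 D2 x =
    \sum_(i < n | d i == d1) (E i (D2 x) - sgn K (d1 && d2) *: D2 (E i x)).
  move=> x; rewrite /sbr !HF /F (lin_sum _ _ _ _ _ HD2l) scaler_sumr.
  by rewrite sumrB.
have sbrD : forall x y, sbr d1 d2 D1 D2 (x + y) = sbr d1 d2 D1 D2 x + sbr d1 d2 D1 D2 y.
  move=> x y; rewrite /sbr (linD _ _ _ HD2l) (linD _ _ _ HD1l) (linD _ _ _ HD1l) (linD _ _ _ HD2l).
  by rewrite scalerDr opprD addrACA.
have Hz : forall x b c, tp (sbr d1 d2 D1 D2 x) b c = 0.
  move=> x b c; move: c; apply: (homog_red (fun c => tp (sbr d1 d2 D1 D2 x) b c)).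
    by move=> c1 c2; rewrite (linD _ _ _ (Ht3 _ b)).
  move=> dc c hc; move: b; apply: (homog_red (fun b => tp (sbr d1 d2 D1 D2 x) b c)).
    by move=> c1 c2; rewrite (linD _ _ _ (Ht2 _ c)).
  move=> db b hb; move: x; apply: (homog_red (fun x => tp (sbr d1 d2 D1 D2 x) b c)).
    by move=> c1 c2; rewrite sbrD (linD _ _ _ (Ht1 b c)).
  move=> dy y hy; rewrite Hsbr (lin_sum _ _ _ _ _ (Ht1 b c)) big1 // => i /eqP Hi.
  rewrite -Hi.
  exact: (keyE _ _ _ _ _ _ _ Hd Htri (HE i).1 (HE i).2 HD2l HD2h HQ _ _ _ _ _ _ hy hb hc).
split => [x b c | HZ x]; first exact: Hz.
by apply: HZ => b c; exact: Hz.
Qed.
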